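(* $(\mathcal{K}(X),\overline{\mathbb{F}})$, with the Hausdorff metric, is strongly (cofinitely) sensitive if and only if $(X,\mathbb{F})$ is strongly (cofinitely) sensitive.
   Context: $(X,d)$ compact metric, $\mathbb{F}=(f_n)$ continuous self-maps, $\omega_n=f_n\circ\cdots\circ f_1$. Strongly (cofinitely) sensitive: there is $\delta>0$ such that for every $x$ and every neighborhood $U$ of $x$ there is $K$ with $\mathrm{diam}(\omega_n(U))>\delta$ for all $n\ge K$. $\mathcal{K}(X)$: non-empty compact subsets with the Hausdorff metric $d_H$; induced system $\overline{\omega}_n(A)=\omega_n(A)$, notion defined analogously using $d_H$. *)

(* Defs.v *)
From Stdlib Require Import Reals List ClassicalEpsilon.
Open Scope R_scope.

(** Supremum of a set of reals (the least upper bound when it exists;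
    an arbitrary real otherwise -- all sets below are nonempty and bounded). *)
Definition Rsup (E : R -> Prop) : R :=
  epsilon (inhabits 0%R) (fun l => is_lub E l).

Definition Rinf (E : R -> Prop) : R := - Rsup (fun r => E (- r)).

Section Metric.
Context {T : Type} (d : T -> T -> R).

Definition is_metric : Prop :=
  (forall x y, 0 <= d x y) /\
  (forall x y, d x y = 0 <-> x = y) /\
  (forall x y, d x y = d y x) /\
  (forall x y z, d x z <= d x y + d y z).

Definition open_set (V : T -> Prop) : Prop :=
  forall x, V x -> exists r, 0 < r /\ forall y, d x y < r -> V y.

Definition compact_subset (A : T -> Prop) : Prop :=
  forall (I : Type) (U : I -> T -> Prop),
    (forall i, open_set (U i)) ->
    (forall x, A x -> exists i, U i x) ->
    exists l : list I, forall x, A x -> exists i, In i l /\ U i x.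

Definition compact_space : Prop := compact_subset (fun _ => True).

Definition continuous_map (g : T -> T) : Prop :=
  forall x eps, 0 < eps -> exists del, 0 < del /\
    forall y, d x y < del -> d (g x) (g y) < eps.

Definition diam (S : T -> Prop) : R :=
  Rsup (fun r => exists x y, S x /\ S y /\ r = d x y).

Definition nbhd_in (S : T -> Prop) (x : T) (U : T -> Prop) : Prop :=
  exists r, 0 < r /\ forall y, S y -> d x y < r -> U y.

End Metric.

Definition image {T : Type} (g : T -> T) (A : T -> Prop) : T -> Prop :=
  fun y => exists x, A x /\ y = g x.

(** omega f n = f_n o ... o f_1 (omega f 0 = id; f 0 is unused, the
    sequence is indexed from 1 as in the paper). *)
Fixpoint omega {T : Type} (f : nat -> T -> T) (n : nat) : T -> T :=
  match n with
  | O => fun x => x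
  | S m => fun x => f (S m) (omega f m x)
  end.

Definition strongly_sensitive {T : Type} (S : T -> Prop) (d : T -> T -> R)
  (f : nat -> T -> T) : Prop :=
  exists delta, 0 < delta /\
    forall x U, S x -> nbhd_in d S x U ->
      exists K : nat, forall n, (K <= n)%nat ->
        diam d (fun y => S y /\ image (omega f n) U y) > delta.

Definition point_set_dist {X : Type} (d : X -> X -> R) (a : X) (B : X -> Prop) : R :=
  Rinf (fun r => exists b, B b /\ r = d a b).

Definition hausdorff_dist {X : Type} (d : X -> X -> R) (A B : X -> Prop) : R :=
  Rmax (Rsup (fun r => exists a, A a /\ r = point_set_dist d a B))
       (Rsup (fun r => exists b, B b /\ r = point_set_dist d b A)).

Definition in_KX {X : Type} (d : X -> X -> R) (A : X -> Prop) : Prop :=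
  (exists a, A a) /\ compact_subset d A.

Definition induced {X : Type} (f : nat -> X -> X) : nat -> (X -> Prop) -> (X -> Prop) :=
  fun n A => image (f n) A.

(* Main.v *)
Require Import Defs.
From Stdlib Require Import Reals.
From Stdlib Require Import Lra Lia List Classical FunctionalExtensionality PropExtensionality ClassicalEpsilon.
Open Scope R_scope.

Lemma Rsup_lub (E : R -> Prop) : (exists x, E x) -> (exists M, forall x, E x -> x <= M) ->
  is_lub E (Rsup E).
Proof.
  intros He [M HM]. unfold Rsup. apply epsilon_spec.
  destruct (completeness E) as [m Hm]. exists M; exact HM. exact He. exists m; exact Hm.
Qed.

Lemma Rsup_ge (E : R -> Prop) x M : E x -> (forall y, E y -> y <= M) -> x <= Rsup E.
Proof. intros Hx HM. destruct (Rsup_lub E) as [H1 _]; eauto. Qed.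

Lemma Rsup_le (E : R -> Prop) M : (exists x, E x) -> (forall y, E y -> y <= M) -> Rsup E <= M.
Proof. intros Hx HM. destruct (Rsup_lub E) as [_ H2]; eauto. Qed.

Lemma Rinf_le (E : R -> Prop) x m : E x -> (forall y, E y -> m <= y) -> Rinf E <= x.
Proof.
  intros Hx Hm. unfold Rinf.
  assert (-x <= Rsup (fun r => E (- r))).
  { apply Rsup_ge with (M := - m). rewrite Ropp_involutive; auto.
    intros y Hy. specialize (Hm _ Hy). lra. }
  lra.
Qed.

Lemma Rinf_ge (E : R -> Prop) m : (exists x, E x) -> (forall y, E y -> m <= y) -> m <= Rinf E.
Proof.
  intros [x Hx] Hm. unfold Rinf.
  assert (Rsup (fun r => E (- r)) <= - m).
  { apply Rsup_le. exists (-x). rewrite Ropp_involutive; auto.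
    intros y Hy. specialize (Hm _ Hy). lra. }
  lra.
Qed.

Lemma diam_gt {T : Type} (dd : T -> T -> R) (S : T -> Prop) M dl :
  (forall x y, S x -> S y -> dd x y <= M) ->
  (exists x y, S x /\ S y /\ dl < dd x y) -> dl < diam dd S.
Proof.
  intros HM (x & y & Sx & Sy & Hl). unfold diam.
  assert (dd x y <= Rsup (fun r => exists x y, S x /\ S y /\ r = dd x y)).
  { apply Rsup_ge with (M := M). eauto.
    intros z (a & b & Sa & Sb & ->). auto. }
  lra.
Qed.

Lemma diam_gt_inv {T : Type} (dd : T -> T -> R) (S : T -> Prop) M dl :
  (forall x y, S x -> S y -> dd x y <= M) -> (exists x, S x) ->
  dl < diam dd S -> exists x y, S x /\ S y /\ dl < dd x y.
Proof.
  intros HM [x0 Hx0] Hl.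
  destruct (classic (exists x y, S x /\ S y /\ dl < dd x y)) as [H|H]; auto.
  exfalso. unfold diam in Hl.
  assert (Rsup (fun r => exists x y, S x /\ S y /\ r = dd x y) <= dl).
  { apply Rsup_le. exists (dd x0 x0). eauto.
    intros z (a & b & Sa & Sb & ->). apply Rnot_lt_le. intro Hc. apply H; eauto. }
  lra.
Qed.

Section H.
Variable X : Type.
Variable d : X -> X -> R.
Hypothesis dpos : forall x y, 0 <= d x y.
Variable M : R.
Hypothesis HM : forall x y, d x y <= M.

Lemma psd_le a B b : B b -> point_set_dist d a B <= d a b.
Proof.
  intros Hb. unfold point_set_dist. apply Rinf_le with (m := 0). eauto.
  intros y (c & _ & ->). auto.
Qed.

Lemma psd_ge a B m : (exists b, B b) -> (forall b, B b -> m <= d a b) ->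
  m <= point_set_dist d a B.
Proof.
  intros [b Hb] Hm. unfold point_set_dist. apply Rinf_ge. eauto.
  intros y (c & Hc & ->). auto.
Qed.

Lemma psd_leM a B : (exists b, B b) -> point_set_dist d a B <= M.
Proof. intros [b Hb]. eapply Rle_trans. apply psd_le; eauto. auto. Qed.

Lemma hd_ge1 A B a : (exists b, B b) -> A a -> point_set_dist d a B <= hausdorff_dist d A B.
Proof.
  intros HB Ha. unfold hausdorff_dist. eapply Rle_trans; [|apply Rmax_l].
  apply Rsup_ge with (M := M). eauto. intros y (c & _ & ->). apply psd_leM; auto.
Qed.

Lemma hd_ge2 A B b : (exists a, A a) -> B b -> point_set_dist d b A <= hausdorff_dist d A B.
Proof.
  intros HA Hb. unfold hausdorff_dist. eapply Rle_trans; [|apply Rmax_r].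
  apply Rsup_ge with (M := M). eauto. intros y (c & _ & ->). apply psd_leM; auto.
Qed.

Lemma hd_le A B c : (exists a, A a) -> (exists b, B b) ->
  (forall a, A a -> point_set_dist d a B <= c) ->
  (forall b, B b -> point_set_dist d b A <= c) -> hausdorff_dist d A B <= c.
Proof.
  intros [a Ha] [b Hb] H1 H2. unfold hausdorff_dist. apply Rmax_lub.
  - apply Rsup_le. eauto. intros y (z & Hz & ->). auto.
  - apply Rsup_le. eauto. intros y (z & Hz & ->). auto.
Qed.

Lemma hd_leM A B : (exists a, A a) -> (exists b, B b) -> hausdorff_dist d A B <= M.
Proof. intros HA HB. apply hd_le; auto; intros; apply psd_leM; auto. Qed.

Lemma hd_gt A B dl : (exists a, A a) -> (exists b, B b) -> dl < hausdorff_dist d A B ->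
  (exists a, A a /\ dl < point_set_dist d a B) \/ (exists b, B b /\ dl < point_set_dist d b A).
Proof.
  intros HA HB Hl.
  destruct (classic (exists a, A a /\ dl < point_set_dist d a B)) as [H|H]; auto.
  destruct (classic (exists b, B b /\ dl < point_set_dist d b A)) as [H'|H']; auto.
  exfalso.
  assert (hausdorff_dist d A B <= dl).
  { apply hd_le; auto.
    - intros a Ha. apply Rnot_lt_le. intro. apply H; eauto.
    - intros b Hb. apply Rnot_lt_le. intro. apply H'; eauto. }
  lra.
Qed.

Lemma finite_compact : forall s (A : X -> Prop), (forall x, A x -> In x s) -> compact_subset d A.
Proof.
  induction s as [|a s IH]; intros A HA I U Uo Hc.
  - exists nil. intros x Hx. destruct (HA x Hx).
  - destruct (IH (fun y => A y /\ y <> a)) with (U := U) as [l Hl]; auto.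
    + intros x [Hx Hne]. destruct (HA x Hx); auto. congruence.
    + intros x [Hx _]. auto.
    + destruct (classic (A a)) as [Ha|Ha].
      * destruct (Hc a Ha) as [i Hi]. exists (i :: l). intros x Hx.
        destruct (classic (x = a)) as [->|Hne].
        -- exists i; simpl; auto.
        -- destruct (Hl x (conj Hx Hne)) as [j [Hj Uj]]. exists j; simpl; auto.
      * exists l. intros x Hx. apply Hl. split; auto. intros ->; auto.
Qed.

End H.

Lemma fold_ge {T} (h : T -> R) : forall l b, (forall b, 0 <= h b) -> In b l ->
  h b <= fold_right (fun b acc => h b + acc) 0 l.
Proof.
  assert (Hn : forall l, (forall b, 0 <= h b) -> 0 <= fold_right (fun b acc => h b + acc) 0 l).
  { induction l; simpl; intros; [lra|]. specialize (IHl H). specialize (H a). lra. }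
  induction l; simpl; intros b Hp Hb; [contradiction|].
  destruct Hb as [->|Hb].
  - specialize (Hn l Hp). lra.
  - specialize (IHl b Hp Hb). specialize (Hp a). lra.
Qed.

Lemma fold_nonneg {T} (h : T -> R) : forall l, (forall b, 0 <= h b) ->
  0 <= fold_right (fun b acc => h b + acc) 0 l.
Proof. induction l; simpl; intros; [lra|]. specialize (IHl H). specialize (H a). lra. Qed.

Lemma bounded_metric (X : Type) (d : X -> X -> R) :
  is_metric d -> compact_space d -> exists M, forall x y, d x y <= M.
Proof.
  intros (dpos & dzero & dsym & dtri) Hc.
  destruct (Hc X (fun a y => d a y < 1)) as [l Hl].
  - intros a y Hy. exists (1 - d a y). split; [lra|].
    intros z Hz. specialize (dtri a y z). lra.
  - intros x _. exists x. assert (d x x = 0) by (apply dzero; auto). lra.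
  - set (g := fun a => fold_right (fun b acc => d a b + acc) 0 l).
    exists (2 + fold_right (fun a acc => g a + acc) 0 l).
    intros x y.
    destruct (Hl x I) as [a [Ha Hxa]]. destruct (Hl y I) as [b [Hb Hyb]].
    assert (d a b <= g a) by (apply (fold_ge (fun b => d a b)); auto).
    assert (g a <= fold_right (fun a acc => g a + acc) 0 l).
    { apply fold_ge; auto. intros c. apply fold_nonneg; auto. }
    pose proof (dtri x a y). pose proof (dtri a b y). rewrite (dsym x a) in *. lra.
Qed.

Lemma omega_induced {X : Type} (f : nat -> X -> X) n B :
  omega (induced f) n B = image (omega f n) B.
Proof.
  induction n; simpl.
  - apply functional_extensionality. intros y. apply propositional_extensionality.
    unfold image. split. intros H; exists y; auto. intros [x [Hx ->]]; auto.
  - rewrite IHn. unfold induced. apply functional_extensionality. intros y.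
    apply propositional_extensionality. unfold image. split.
    + intros [x [[z [Hz ->]] ->]]. eauto.
    + intros [z [Hz ->]]. eauto.
Qed.

Lemma list_K {I : Type} (P : I -> nat -> Prop) :
  (forall i, exists K, forall n, (K <= n)%nat -> P i n) ->
  forall l, exists K, forall i, In i l -> forall n, (K <= n)%nat -> P i n.
Proof.
  intros H. induction l as [|a l [K IH]].
  - exists O. intros i [].
  - destruct (H a) as [Ka Ha]. exists (Nat.max Ka K). intros i [->|Hi] n Hn.
    + apply Ha. lia.
    + apply IH; auto. lia.
Qed.

Lemma list_choose {I T : Type} (P : I -> T -> Prop) : forall l,
  (forall i, In i l -> exists y, P i y) ->
  exists ly, (forall i, In i l -> exists y, In y ly /\ P i y) /\
             (forall y, In y ly -> exists i, In i l /\ P i y).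
Proof.
  induction l as [|a l IH]; intros H.
  - exists nil. split; intros _ [].
  - destruct (H a (or_introl eq_refl)) as [ya Ha].
    destruct IH as [ly [H1 H2]]. intros i Hi; apply H; simpl; auto.
    exists (ya :: ly). split.
    + intros i [->|Hi]. exists ya; simpl; auto.
      destruct (H1 i Hi) as [y [Hy Py]]. exists y; simpl; auto.
    + intros y [<-|Hy]. exists a; simpl; auto.
      destruct (H2 y Hy) as [i [Hi Pi]]. exists i; simpl; auto.
Qed.

Theorem mainTheorem9 (X : Type) (d : X -> X -> R) (f : nat -> X -> X) :
  is_metric d -> compact_space d -> (forall n, continuous_map d (f n)) ->
  (strongly_sensitive (in_KX d) (hausdorff_dist d) (induced f)
   <-> strongly_sensitive (fun _ : X => True) d f).
Proof.
  intros Hm Hc _.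
  destruct (bounded_metric X d Hm Hc) as [M HM].
  destruct Hm as (dpos & dzero & dsym & dtri).
  assert (d0 : forall x, d x x = 0) by (intros; apply dzero; auto).
  assert (HKM : forall P Q, in_KX d P -> in_KX d Q -> hausdorff_dist d P Q <= M).
  { intros P Q [HP _] [HQ _]. apply hd_leM; auto. }
  split.
  - intros [dl [Hdl HK]]. exists dl. split; auto.
    intros x U _ [r [Hr HU]].
    set (x' := fun z : X => z = x).
    set (U' := fun B : X -> Prop => forall b, B b -> d x b < r).
    assert (Hx' : in_KX d x').
    { split. exists x; reflexivity. apply finite_compact with (s := x :: nil).
      intros z ->; simpl; auto. }
    assert (Hnb : nbhd_in (hausdorff_dist d) (in_KX d) x' U').
    { exists r. split; auto. intros B [Bne _] Hlt b Bb.
      assert (point_set_dist d b x' <= hausdorff_dist d x' B).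
      { apply hd_ge2 with (M := M); auto. exists x; reflexivity. }
      assert (d b x <= point_set_dist d b x').
      { apply psd_ge. exists x; reflexivity. intros z ->; lra. }
      rewrite dsym. lra. }
    destruct (HK x' U' Hx' Hnb) as [K HK']. exists K. intros n Hn.
    specialize (HK' n Hn).
    apply diam_gt_inv with (M := M) in HK'.
    2:{ intros P Q [HP _] [HQ _]. auto. }
    2:{ exists (omega (induced f) n x'). split.
        - rewrite omega_induced. split. exists (omega f n x). exists x; split; reflexivity.
          apply finite_compact with (s := omega f n x :: nil).
          intros z [w [-> ->]]. simpl; auto.
        - exists x'. split; auto. intros b ->. rewrite d0; auto. }
    destruct HK' as (P & Q & [HP [B1 [UB1 ->]]] & [HQ [B2 [UB2 ->]]] & Hlt).
    rewrite (omega_induced f n B1), (omega_induced f n B2) in *.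
    destruct HP as [HP1 _]. destruct HQ as [HQ1 _].
    apply diam_gt with (M := M). intros; auto.
    destruct (hd_gt X d _ _ _ HP1 HQ1 Hlt) as [[p [Hp Hlp]]|[q [Hq Hlq]]].
    + destruct HQ1 as [q Hq].
      pose proof (psd_le X d dpos p _ q Hq).
      destruct Hp as [b1 [Hb1 ->]]. destruct Hq as [b2 [Hb2 ->]].
      exists (omega f n b1), (omega f n b2). split; [|split].
      * split; auto. exists b1; split; auto.
      * split; auto. exists b2; split; auto.
      * lra.
    + destruct HP1 as [p Hp].
      pose proof (psd_le X d dpos q _ p Hp).
      destruct Hp as [b1 [Hb1 ->]]. destruct Hq as [b2 [Hb2 ->]].
      exists (omega f n b2), (omega f n b1). split; [|split].
      * split; auto. exists b2; split; auto.
      * split; auto. exists b1; split; auto.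
      * lra.
  - intros [dl [Hdl HX]]. exists (dl / 4). split; [lra|].
    intros A U [[a0 Ha0] Ac] [r [Hr HU]].
    destruct (Ac {a : X | A a} (fun i y => d (proj1_sig i) y < r / 4)) as [l Hl].
    + intros i y Hy. exists (r / 4 - d (proj1_sig i) y). split; [lra|].
      intros z Hz. specialize (dtri (proj1_sig i) y z). lra.
    + intros x Ax. exists (exist _ x Ax). simpl. rewrite d0. lra.
    + destruct (list_K (fun (i : {a : X | A a}) n =>
          dl < diam d (fun y => True /\ image (omega f n) (fun y => d (proj1_sig i) y < r / 4) y)))
        with (l := l) as [K HK].
      { intros i. destruct (HX (proj1_sig i) (fun y => d (proj1_sig i) y < r / 4) I) as [K HK].
        exists (r / 4). split; [lra|]. auto.
        exists K. intros n Hn. apply HK; auto. }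
      exists K. intros n Hn.
      set (q := omega f n a0).
      set (P := fun (i : {a : X | A a}) y => d (proj1_sig i) y < r / 4 /\ dl / 2 < d (omega f n y) q).
      destruct (list_choose P l) as [ly [Hly1 Hly2]].
      { intros i Hi. specialize (HK i Hi n Hn).
        apply diam_gt_inv with (M := M) in HK; auto.
        2:{ exists (omega f n (proj1_sig i)). split; auto. exists (proj1_sig i). split; auto.
            rewrite d0; lra. }
        destruct HK as (x1 & x2 & [_ [y1 [Hy1 ->]]] & [_ [y2 [Hy2 ->]]] & Hlt).
        destruct (Rle_or_lt (d (omega f n y1) q) (dl / 2)) as [H1|H1].
        - destruct (Rle_or_lt (d (omega f n y2) q) (dl / 2)) as [H2|H2].
          + exfalso. pose proof (dtri (omega f n y1) q (omega f n y2)).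
            rewrite (dsym q) in H. lra.
          + exists y2; split; auto.
        - exists y1; split; auto. }
      destruct (Hl a0 Ha0) as [i0 [Hi0 _]].
      destruct (Hly1 i0 Hi0) as [y0 [Hy0 _]].
      set (D1 := fun y => In y (a0 :: ly)).
      set (D2 := fun y => In y ly).
      assert (HD : forall D : X -> Prop, (forall y, D y -> y = a0 \/ In y ly) ->
                   (forall y, In y ly -> D y) -> in_KX d D -> U D).
      { intros D HDs HDy HDK. apply HU; auto.
        assert (hausdorff_dist d A D <= r / 2); [|lra].
        apply hd_le; auto. eauto. exists y0; auto.
        - intros a Ha. destruct (Hl a Ha) as [i [Hi Hia]].
          destruct (Hly1 i Hi) as [y [Hy [Hiy _]]].
          eapply Rle_trans. apply psd_le with (b := y); auto.
          pose proof (dtri a (proj1_sig i) y) as Ht. rewrite (dsym a (proj1_sig i)) in Ht. cbv beta in Hia, Hiy. lra.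
        - intros y Hy. destruct (HDs y Hy) as [->|Hy'].
          + eapply Rle_trans. apply psd_le with (b := a0); auto. rewrite d0; lra.
          + destruct (Hly2 y Hy') as [i [Hi [Hiy _]]].
            eapply Rle_trans. apply psd_le with (b := proj1_sig i); auto.
            apply (proj2_sig i). rewrite dsym; lra. }
      assert (HF : forall s, in_KX d (image (omega f n) (fun y => In y s)) \/ s = nil).
      { intros [|a s]; [right; reflexivity|left]. split.
        - exists (omega f n a). exists a. simpl; auto.
        - apply finite_compact with (s := map (omega f n) (a :: s)).
          intros z [w [Hw ->]]. apply in_map; auto. }
      assert (HD1 : in_KX d (image (omega f n) D1)).
      { destruct (HF (a0 :: ly)) as [H|H]; [exact H|discriminate]. }
      assert (HD2 : in_KX d (image (omega f n) D2)).
      { destruct (HF ly) as [H|H]; [exact H|]. rewrite H in Hy0; destruct Hy0. }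
      assert (HD1' : in_KX d D1).
      { split. - exists a0. left. reflexivity. - apply finite_compact with (s := a0 :: ly). intros; assumption. }
      assert (HD2' : in_KX d D2).
      { split. - exists y0. exact Hy0. - apply finite_compact with (s := ly). intros; assumption. }
      assert (UD1 : U D1).
      { apply HD; [ intros y [->|Hy]; auto | intros y Hy; right; exact Hy | exact HD1' ]. }
      assert (UD2 : U D2).
      { apply HD; [ intros y Hy; right; exact Hy | intros y Hy; exact Hy | exact HD2' ]. }
      apply diam_gt with (M := M). intros P' Q' [HP' _] [HQ' _]; auto.
      exists (omega (induced f) n D1), (omega (induced f) n D2).
      split; [split; [rewrite omega_induced; auto | exists D1; auto]|].
      split; [split; [rewrite omega_induced; auto | exists D2; auto]|].
      rewrite !omega_induced.
      assert (dl / 2 <= point_set_dist d q (image (omega f n) D2)).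
      { apply psd_ge. destruct HD2; auto.
        intros z [y [Hy ->]]. destruct (Hly2 y Hy) as [i [_ [_ Hq]]].
        rewrite dsym. lra. }
      assert (point_set_dist d q (image (omega f n) D2)
              <= hausdorff_dist d (image (omega f n) D1) (image (omega f n) D2)).
      { apply hd_ge1 with (M := M); [ exact dpos | exact HM | destruct HD2; auto | exists a0; split; [left; reflexivity | reflexivity] ]. }
      lra.
Qed.
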